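(* Let $X$ and $Y$ be two real random variables satisfying $X \leq_{cx} Y$, with distribution functions $F_X$ and $F_Y$ respectively. For a given $\alpha \in \mathbb{R}$, let \[h = \min\left[1,\ \max\left\{w : w (x-\alpha) \leq \int_{-\infty}^x F_Y(t)\, \mathrm{d} t \ \text{ for all } x \in \mathbb{R}\right\} \right].\] Then $F_X(\alpha) \leq h$. Furthermore, there exists a random variable $\tilde X$, with distribution function $F_{\tilde X}$, such that $\tilde X \leq_{cx} Y$ and $F_{\tilde X}(\alpha) = h$.
   Context: For random variables $X$ and $Y$, $X \leq_{cx} Y$ means $\mathrm{E}\{h(X)\} \leq \mathrm{E}\{h(Y)\}$ for every convex function $h$ for which the expectations exist. *)

(* Defs.v *)
From HB Require Import structures.
From mathcomp Require Import all_boot all_order all_algebra.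
From mathcomp Require Import all_classical all_reals all_analysis.
Set Implicit Arguments. Unset Strict Implicit. Unset Printing Implicit Defensive.
Import Order.TTheory GRing.Theory Num.Theory.
Import numFieldNormedType.Exports.
Local Open Scope classical_set_scope.
Local Open Scope ring_scope.

Definition expectation_exists d (T : measurableType d) (R : realType)
  (P : probability T R) (g : T -> R) : Prop :=
  (\int[P]_x ((fun y => (g y)%:E)^\+ x) < +oo)%E \/
  (\int[P]_x ((fun y => (g y)%:E)^\- x) < +oo)%E.

Definition cx_le d d' (T : measurableType d) (T' : measurableType d')
  (R : realType) (P : probability T R) (X : {RV P >-> R})
  (Q : probability T' R) (Y : {RV Q >-> R}) : Prop :=
  forall h : R -> R, convex_function (E := R^o) setT h ->
    expectation_exists P (h \o X) -> expectation_exists Q (h \o Y) ->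
    (\int[P]_x (h (X x))%:E <= \int[Q]_y (h (Y y))%:E)%E.

Definition int_cdf d (T : measurableType d) (R : realType)
  (P : probability T R) (Y : {RV P >-> R}) (x : R) : \bar R :=
  (\int[lebesgue_measure]_(t in `]-oo, x]) cdf Y t)%E.

(* h = min [1, max { w : w (x - alpha) <= \int_{-oo}^x F_Y for all x }] ;
   the max is taken as the supremum (the set is a closed interval). *)
Definition hbound d (T : measurableType d) (R : realType)
  (P : probability T R) (Y : {RV P >-> R}) (alpha : R) : R :=
  Num.min 1 (sup [set w : R | forall x : R,
                   ((w * (x - alpha))%:E <= int_cdf Y x)%E]).

(* Main.v *)
Require Import Defs.
From HB Require Import structures.
From mathcomp Require Import all_boot all_order all_algebra.
From mathcomp Require Import all_classical all_reals all_analysis.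
From mathcomp Require Import ring lra measurable_realfun.
Import Order.TTheory GRing.Theory Num.Theory.
Set Implicit Arguments. Unset Strict Implicit. Unset Printing Implicit Defensive.
Import numFieldNormedType.Exports.
Local Open Scope classical_set_scope.
Local Open Scope ring_scope.
Section S.
Context d (T : measurableType d) (R : realType) (P : probability T R).
Local Open Scope ereal_scope.
Variable Y : {RV P >-> R}.

Lemma int_cdfE x : int_cdf Y x = \int[P]_w (Num.max (x - Y w) 0)%:E.
Proof.
pose A := [set p : measurableTypeR R * T | (p.1 <= x)%R] `&` [set p : measurableTypeR R * T | (Y p.2 <= p.1)%R].
have mA : measurable A.
  apply: measurableI.
    have := @measurable_fst _ _ (measurableTypeR R) T measurableT (`]-oo, x]%classic) (measurable_itv _).
    rewrite setTI. congr measurable; apply/seteqP; split => p /=; rewrite in_itv//=.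
  have := @measurable_fun_le _ _ R setT (fun p : measurableTypeR R * T => Y p.2) fst measurableT.
  rewrite setTI; apply => //.
  apply: measurableT_comp => //; exact: measurable_snd.
have mf : measurable_fun setT (fun p : measurableTypeR R * T => (\1_A p : R)%:E).
  apply/measurable_EFinP; exact/measurable_indicP.
rewrite /int_cdf.
transitivity (\int[lebesgue_measure]_t \int[P]_w (\1_A (t, w) : R)%:E).
{ rewrite integral_mkcond; apply: eq_integral => t _.
  rewrite /patch; case: ifPn => tx.
  - have mB : measurable (Y @^-1` `]-oo, t]%classic).
      by rewrite -[X in measurable X]setTI; apply: (measurable_funP Y) => //; exact: measurable_itv.
    transitivity (\int[P]_w (\1_(Y @^-1` `]-oo, t]%classic) w : R)%:E); last first.
      apply: eq_integral => w _; congr (_%:E).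
      rewrite /indic; congr (_%:R); congr (nat_of_bool _); apply/idP/idP => /set_mem H; apply/mem_set.
        move: H; rewrite /= in_itv /=; move: tx; rewrite inE /= in_itv /= => tx H; by split.
      by move: H => [_ /=]; rewrite in_itv /=.
    by rewrite integral_indic // setIT.
  - rewrite integral0_eq // => w _; rewrite /indic memNset //.
    by move=> [/= H _]; move: tx => /negP; apply; apply/mem_set; rewrite /= in_itv /= H. }
transitivity (\int[P]_w \int[lebesgue_measure]_t (\1_A (t, w) : R)%:E).
  have := (@fubini_tonelli _ _ _ _ R (@lebesgue_measure R) P (fun p => (\1_A p : R)%:E) mf).
  by apply => p; rewrite lee_fin.
apply: eq_integral => w _.
transitivity (\int[lebesgue_measure]_t (\1_(`[Y w, x]%classic) t : R)%:E).
  apply: eq_integral => t _; congr (_%:E).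
  rewrite /indic; congr (_%:R); congr (nat_of_bool _); apply/idP/idP => /set_mem H; apply/mem_set.
    by case: H => /= H1 H2; rewrite /= in_itv /= H1 H2.
  by move: H; rewrite /= in_itv /= => /andP[H1 H2]; split.
rewrite integral_indic //.
rewrite setIT.
have H := lebesgue_measure_itv `[Y w, x].
apply: (eq_trans H) => /=; rewrite lte_fin.
case: ltP => H1; first by rewrite -EFinD; congr (_%:E); apply/esym/max_idPl; rewrite subr_ge0 ltW.
by congr (_%:E); apply/esym/max_idPr; rewrite subr_le0.
Qed.
End S.
Section S.
Context d (T : measurableType d) (R : realType) (P : probability T R).
Variable Y : {RV P >-> R}.
Hypothesis Yint : P.-integrable setT (EFin \o Y).
Local Open Scope ereal_scope.

Definition mY := fine (\int[P]_w (Y w)%:E).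
Definition MM (c e : R) := fine (\int[P]_w (Num.max (c + e * Y w) 0)%:E).

Lemma intY : \int[P]_w (Y w)%:E = mY%:E.
Proof. by rewrite fineK //; exact: integrable_fin_num. Qed.

Lemma int_cst (r : R) : P.-integrable setT (fun w : T => r%:E).
Proof. exact: (finite_measure_integrable_cst _ _ measurableT). Qed.

Lemma int_lin (a b : R) : P.-integrable setT (fun w => (a + b * Y w)%:E).
Proof.
have -> : (fun w => (a + b * Y w)%:E) = (fun w => a%:E) \+ (fun w => b%:E * (Y w)%:E).
  by apply/funext => w.
apply: integrableD => //; first exact: int_cst.
exact: integrableZl.
Qed.

Lemma int_max (c e : R) : P.-integrable setT (fun w => (Num.max (c + e * Y w) 0)%:E).
Proof.
apply: (@le_integrable _ _ _ P setT measurableT _ (fun w => (`|c| + `|e| * `|Y w|)%:E)).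
- apply/measurable_EFinP; apply: measurable_maxr => //.
  apply: measurable_funD => //; apply: measurable_funM => //.
- move=> w _; rewrite !abse_EFin lee_fin.
  have h0 : (0 <= Num.max (c + e * Y w) 0)%R by rewrite le_max lexx orbT.
  rewrite (ger0_norm h0) ger0_norm; last by rewrite addr_ge0 // mulr_ge0.
  rewrite ge_max addr_ge0 ?mulr_ge0 // andbT.
  apply: le_trans (ler_norm _) _; rewrite (le_trans (ler_normD _ _)) // normrM //.
- have -> : (fun w => (`|c| + `|e| * `|Y w|)%:E) = (fun w => `|c|%:E) \+ (fun w => `|e|%:E * ((Num.norm \o Y) w)%:E).
    by apply/funext => w.
  apply: integrableD => //; first exact: int_cst.
  apply: integrableZl => //; exact: integrable_norm.
Qed.

Lemma intM c e : \int[P]_w (Num.max (c + e * Y w) 0)%:E = (MM c e)%:E.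
Proof. rewrite fineK //; apply: integrable_fin_num => //. exact: int_max. Qed.

Lemma ExF a b g c e :
  \int[P]_w (a + b * Y w + g * Num.max (c + e * Y w) 0)%:E = (a + b * mY + g * MM c e)%:E.
Proof.
rewrite (_ : (fun w => _) = (fun w => (a + b * Y w)%:E + g%:E * (Num.max (c + e * Y w) 0)%:E)); last by apply/funext.
have i1 := int_lin a b.
have i2 := integrableZl measurableT g (int_max c e).
rewrite (integralD measurableT i1 i2).
rewrite integralZl //; last exact: int_max.
rewrite intM.
rewrite (_ : (fun w => _) = (fun w => a%:E + b%:E * (Y w)%:E)); last by apply/funext.
have i3 := integrableZl measurableT b Yint.
rewrite (integralD measurableT (int_cst a) i3).
rewrite integralZl // intY integral_cst //.
match goal with |- context [(_ * ?Q)%E] => have HQ : Q = 1%E by exact: probability_setT end.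
by rewrite HQ mule1 -!EFinM -!EFinD.
Qed.
End S.
Section C.
Context (R : realType).
Implicit Types phi : R -> R.

Lemma conv_ineq phi (hphi : convex_function (E := R^o) setT phi) (l x y : R) :
  0 <= l -> l <= 1 -> phi (l * x + (1 - l) * y) <= l * phi x + (1 - l) * phi y.
Proof.
move=> l0 l1.
have := hphi (@Itv01 _ l l0 l1) x y (mem_set I) (mem_set I).
by rewrite !convRE /=.
Qed.

Lemma chord phi (hphi : convex_function (E := R^o) setT phi) (u a v : R) :
  u < a -> a < v -> (phi a - phi u) * (v - a) <= (phi v - phi a) * (a - u).
Proof.
move=> ua av.
have vu : 0 < v - u by rewrite subr_gt0 (lt_trans ua av).
pose l := (v - a) / (v - u).
have l0 : 0 <= l by rewrite divr_ge0 // ltW // subr_gt0.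
have l1 : l <= 1 by rewrite ler_pdivrMr // mul1r lerD2l lerN2 ltW.
have ea : l * u + (1 - l) * v = a.
  rewrite /l; field; by rewrite gt_eqF.
have H := @conv_ineq phi hphi l u v l0 l1; rewrite ea in H.
have := ler_wpM2r (ltW vu) H.
have -> : (l * phi u + (1 - l) * phi v) * (v - u) = (v - a) * phi u + (a - u) * phi v.
  rewrite /l; field; by rewrite gt_eqF.
move=> H2; nra.
Qed.

Lemma support phi (hphi : convex_function (E := R^o) setT phi) (a : R) :
  exists s, forall t, phi a + s * (t - a) <= phi t.
Proof.
pose S := [set (phi a - phi u) / (a - u) | u in [set u | u < a]].
have Sne : S !=set0.
  exists ((phi a - phi (a - 1)) / (a - (a - 1))); exists (a - 1) => //=.
  by rewrite ltrBlDr ltrDl.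
have Sub v : a < v -> ubound S ((phi v - phi a) / (v - a)).
  move=> av _ [u /= ua <-].
  have au : 0 < a - u by rewrite subr_gt0.
  have va : 0 < v - a by rewrite subr_gt0.
  rewrite ler_pdivrMr // mulrAC ler_pdivlMr //.
  exact: chord.
have hS : has_sup S.
  split => //; exists ((phi (a + 1) - phi a) / (a + 1 - a)); apply: Sub.
  by rewrite ltrDl.
exists (sup S) => t.
have [ta|ta2|->] := ltgtP t a; last by rewrite subrr mulr0 addr0.
- have : (phi a - phi t) / (a - t) <= sup S.
    by apply: sup_upper_bound => //; exists t.
  have au : 0 < a - t by rewrite subr_gt0.
  rewrite ler_pdivrMr // => H; nra.
- have : sup S <= (phi t - phi a) / (t - a) by apply: ge_sup => //; exact: Sub.
  have va : 0 < t - a by rewrite subr_gt0.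
  rewrite ler_pdivlMr // => H; nra.
Qed.
End C.
Section M.
Context d (T : measurableType d) (R : realType) (mu : {measure set T -> \bar R}).
Local Open Scope ereal_scope.

Lemma nn_mono (f g : T -> \bar R) : (forall x, 0 <= g x) -> (forall x, g x <= f x) ->
  \int[mu]_x g x <= \int[mu]_x f x.
Proof.
move=> g0 gf.
have f0 x : 0 <= f x by apply: le_trans (gf x).
rewrite !ge0_integralTE //.
apply: ereal_sup_le => _ [h /= hg <-]; exists h => //= x.
exact: le_trans (hg x) (gf x).
Qed.

Lemma le_int_gen (f g : T -> \bar R) : (forall x, g x <= f x) ->
  \int[mu]_x g x <= \int[mu]_x f x.
Proof.
move=> gf.
rewrite (integralE _ _ g) (integralE _ _ f).
apply: leeB.
- apply: nn_mono => x; first exact: funepos_ge0.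
  by apply: (@funepos_le _ _ setT _ _ (fun y _ => gf y)); exact: in_setT.
- apply: nn_mono => x; first exact: funeneg_ge0.
  by apply: (@funeneg_le _ _ setT _ _ (fun y _ => gf y)); exact: in_setT.
Qed.
End M.
Arguments MM {d T R P} Y c e.
Arguments mY {d T R P} Y.
Section K.
Context d (T : measurableType d) (R : realType) (P : probability T R).
Variable Y : {RV P >-> R}.
Hypothesis Yint : P.-integrable setT (EFin \o Y).

Lemma MM_eq c e al be ga c' e' :
  (forall y : R, Num.max (c + e * y) 0 = al + be * y + ga * Num.max (c' + e' * y) 0) ->
  MM Y c e = al + be * mY Y + ga * MM Y c' e'.
Proof.
move=> H.
have := ExF Yint 0 0 1 c e; have := ExF Yint al be ga c' e'.
rewrite (_ : (fun w => _) = (fun w => (0 + 0 * Y w + 1 * Num.max (c + e * Y w) 0)%:E)); last first.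
  by apply/funext => w; rewrite H mul0r !add0r mul1r.
move=> -> [].
by rewrite mul0r !add0r mul1r.
Qed.

Lemma maxP (e z : R) : 0 < e -> Num.max (e * z) 0 = e * z + e * Num.max (- z) 0.
Proof.
move=> e0; case: (leP 0 z) => z0.
- rewrite (max_idPl (mulr_ge0 (ltW e0) z0)).
  by rewrite (max_idPr _) ?mulr0 ?addr0 // oppr_le0.
- rewrite (max_idPr _); last by rewrite pmulr_rle0 // ltW.
  rewrite (max_idPl _); last by rewrite oppr_ge0 ltW.
  by rewrite mulrN subrr.
Qed.

Lemma maxN (e z : R) : e < 0 -> Num.max (e * z) 0 = (- e) * Num.max (- z) 0.
Proof.
move=> e0; case: (leP 0 z) => z0.
- rewrite (max_idPr _); last by rewrite nmulr_rle0.
  by rewrite (max_idPr _) ?mulr0 // oppr_le0.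
- rewrite (max_idPl _); last by rewrite nmulr_rge0 // ltW.
  by rewrite (max_idPl _) ?mulrNN // oppr_ge0 ltW.
Qed.

Variables (p a b : R).
Hypotheses (p0 : 0 <= p) (p1 : p <= 1) (hm : p * a + (1 - p) * b = mY Y).
Hypothesis hG : forall k, p * Num.max (k - a) 0 + (1 - p) * Num.max (k - b) 0 <= MM Y k (-1).

Lemma key c e : p * Num.max (c + e * a) 0 + (1 - p) * Num.max (c + e * b) 0 <= MM Y c e.
Proof.
have [e0|e0|->] := ltgtP e 0.
- pose k := - c / e.
  have ce y : c + e * y = e * (- (k - y)).
    by rewrite /k; field; rewrite lt_eqF.
  have HM : MM Y c e = 0 + 0 * mY Y + (- e) * MM Y k (-1).
    apply: MM_eq => y; rewrite ce maxN // opprK mul0r !add0r.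
    by rewrite mulN1r.
  rewrite HM !ce !maxN // !opprK mul0r !add0r.
  have := hG k; nra.
- pose k := - c / e.
  have ce y : c + e * y = e * (- (k - y)).
    by rewrite /k; field; rewrite gt_eqF.
  have HM : MM Y c e = (- e * k) + e * mY Y + e * MM Y k (-1).
    apply: MM_eq => y; rewrite ce maxP // opprK mulN1r.
    ring.
  rewrite HM !ce !maxP // !opprK -hm.
  have := hG k; nra.
- have HM : MM Y c 0 = Num.max c 0 + 0 * mY Y + 0 * MM Y c 0.
    by apply: MM_eq => y; rewrite !mul0r !addr0.
  rewrite HM !mul0r !addr0; nra.
Qed.

Lemma conv_two (phi : R -> R) : convex_function (E := R^o) setT phi ->
  ((p * phi a + (1 - p) * phi b)%:E <= \int[P]_w (phi (Y w))%:E)%E.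
Proof.
move=> hphi.
have [sa Ha] := support hphi a.
have [sb Hb] := support hphi b.
pose c := phi b - sb * b - phi a + sa * a.
pose e := sb - sa.
apply: (@le_trans _ _ (\int[P]_w ((phi a - sa * a) + sa * Y w + 1 * Num.max (c + e * Y w) 0)%:E)%E); last first.
  apply: le_int_gen => w.
  rewrite lee_fin mul1r.
  have Ea : phi a - sa * a + sa * Y w = phi a + sa * (Y w - a) by ring.
  have Eb : c + e * Y w = phi b + sb * (Y w - b) - (phi a + sa * (Y w - a)) by rewrite /c /e; ring.
  rewrite Ea Eb; case: (leP 0 (phi b + sb * (Y w - b) - (phi a + sa * (Y w - a)))) => h.
    by rewrite addrC subrK; exact: Hb.
  by rewrite addr0; exact: Ha.
rewrite ExF // lee_fin.
have := key c e.
have hb : Num.max (c + e * b) 0 = phi b - phi a - sa * (b - a).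
  have -> : c + e * b = phi b - phi a - sa * (b - a) by rewrite /c /e; ring.
  apply/max_idPl; have := Ha b; nra.
have ha : Num.max (c + e * a) 0 = 0.
  have -> : c + e * a = phi b + sb * (a - b) - phi a by rewrite /c /e; ring.
  apply/max_idPr; have := Hb a; nra.
rewrite ha hb -hm; nra.
Qed.
End K.
Section L.
Context d (T : measurableType d) (R : realType) (P : probability T R).
Variable Y : {RV P >-> R}.
Hypothesis Yint : P.-integrable setT (EFin \o Y).

Lemma tail_small (A del : R) : 0 < del -> ~ (forall x : R, A < x -> del <= MM Y (- x) 1).
Proof.
move=> d0 H.
pose f_ := fun (n : nat) (w : T) => (Num.max (- n%:R + 1 * Y w) 0)%:E.
have cv : (fun n => (\int[P]_w f_ n w)%E) @ \oo --> (\int[P]_w (cst 0%E) w)%E.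
  apply: (@dominated_cvg _ _ _ P setT measurableT f_ (cst 0%E) (fun w => (`|Y w|)%:E)).
  - move=> n; apply/measurable_EFinP; apply: measurable_maxr => //.
    by apply: measurable_funD => //; apply: measurable_funM.
  - move=> w _; apply: cvg_near_cst.
    near=> n.
    rewrite /f_ /= (_ : Num.max (- n%:R + 1 * Y w) 0 = 0) //; apply/max_idPr.
    rewrite mul1r addrC subr_le0.
    near: n; exact: nbhs_infty_ger.
  - by [].
  - exact: integrable_norm.
  - move=> n w _; rewrite /f_ abse_EFin lee_fin.
    have h0 : (0 <= Num.max (- n%:R + 1 * Y w) 0) by rewrite le_max lexx orbT.
    rewrite ger0_norm // ge_max normr_ge0 andbT mul1r.
    have h1 : (0:R) <= n%:R := ler0n _ _.
    have := ler_norm (Y w); lra.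
have : (del%:E <= \int[P]_w (cst 0%E) w)%E.
  apply: (cvge_ge _ cv); near=> n.
  rewrite /f_ intM // lee_fin; apply: H.
  near: n; exact: nbhs_infty_gtr.
by rewrite integral0 lee_fin leNgt d0.
Unshelve. all: by end_near.
Qed.
End L.
Section B.
Context (R : realType).
Lemma maxsub (x : R) : (Num.max x 0 - Num.max (- x) 0 = x)%R.
Proof.
have [h|h] := boolP (0 <= x).
  by rewrite (max_idPl h) (max_idPr _) ?subr0 // oppr_le0.
rewrite -ltNge in h.
rewrite (max_idPr (ltW h)) (max_idPl _) ?opprK ?add0r //.
all: lra.
Qed.

Local Open Scope ereal_scope.
Lemma maxeE (x : R) : maxe x%:E 0 = (Num.max x 0)%:E.
Proof. by rewrite -EFin_max. Qed.

Lemma int_bern (p : R) (p01 : (0 <= p <= 1)%R) (f : bool -> R) :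
  \int[bernoulli_prob p]_b (f b)%:E = (p * f true + (1 - p) * f false)%:E.
Proof.
rewrite integralE.
rewrite !integral_bernoulli_prob //.
rewrite !funeposE !funenegE /= !maxeE -!EFinM -!EFinD.
congr (_%:E); rewrite /unstable.onem.
have := maxsub (f true); have := maxsub (f false); nra.
Qed.
End B.
Section P1.
Context d (T : measurableType d) (R : realType) (P : probability T R).

Lemma phi_convex (x : R) : convex_function (E := R^o) setT (fun t : R => Num.max (x - t) 0).
Proof.
move=> l u v _ _; rewrite !convRE /=.
rewrite (_ : conv l u v = l%:inum * u + (1 - l%:inum) * v :> R); last by [].
have l0 : 0 <= l%:inum by exact: ge0.
have l1 : l%:inum <= 1 by exact: le1.
set L := l%:inum in l0 l1 *.
have h1 : x - u <= Num.max (x - u) 0 by rewrite le_max lexx.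
have h1' : 0 <= Num.max (x - u) 0 by rewrite le_max lexx orbT.
have h2 : x - v <= Num.max (x - v) 0 by rewrite le_max lexx.
have h2' : 0 <= Num.max (x - v) 0 by rewrite le_max lexx orbT.
rewrite /unstable.onem -/L.
rewrite ge_max; apply/andP; split; nra.
Qed.

Lemma MM_ge0 (Y : {RV P >-> R}) (Yint : P.-integrable setT (EFin \o Y)) c e : 0 <= MM Y c e.
Proof.
rewrite /MM; apply: fine_ge0; apply: integral_ge0 => w _.
by rewrite lee_fin le_max lexx orbT.
Qed.

Lemma icdf (Y : {RV P >-> R}) (Yint : P.-integrable setT (EFin \o Y)) x :
  int_cdf Y x = (MM Y x (-1))%:E.
Proof.
rewrite int_cdfE -(intM Yint); apply: eq_integral => w _.
by rewrite mulN1r.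
Qed.

Lemma G_split (Y : {RV P >-> R}) (Yint : P.-integrable setT (EFin \o Y)) x :
  MM Y x (-1) = x + (-1) * mY Y + 1 * MM Y (-x) 1.
Proof.
apply: MM_eq => // y.
rewrite !mulN1r !mul1r.
have := maxsub (x - y); rewrite opprB => H.
rewrite (addrC (- x) y); lra.
Qed.

Lemma Gk_ge (Y : {RV P >-> R}) (Yint : P.-integrable setT (EFin \o Y)) k :
  Num.max (k - mY Y) 0 <= MM Y k (-1).
Proof.
rewrite ge_max MM_ge0 // andbT (G_split Yint) mulN1r mul1r lerDl.
exact: MM_ge0.
Qed.

Lemma G_le (X Y : {RV P >-> R}) (Xint : P.-integrable setT (EFin \o X))
  (Yint : P.-integrable setT (EFin \o Y)) (cx : cx_le X Y) x :
  MM X x (-1) <= MM Y x (-1).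
Proof.
have ex (Z : {RV P >-> R}) (Zint : P.-integrable setT (EFin \o Z)) :
    expectation_exists P ((fun t => Num.max (x - t) 0) \o Z).
  left; rewrite (_ : (fun w => _) = (fun w => (Num.max (x + (-1) * Z w) 0)%:E)).
    by rewrite intM // ltry.
  apply/funext => w; rewrite funeposE /= mulN1r.
  by apply/max_idPl; rewrite lee_fin le_max lexx orbT.
have H := cx (fun t => Num.max (x - t) 0) (phi_convex x) (ex _ Xint) (ex _ Yint).
rewrite /= in H.
have eX : (\int[P]_w (Num.max (x - X w) 0)%:E = (MM X x (-1))%:E)%E.
  rewrite -(intM Xint); apply: eq_integral => w _; by rewrite mulN1r.
have eY : (\int[P]_w (Num.max (x - Y w) 0)%:E = (MM Y x (-1))%:E)%E.
  rewrite -(intM Yint); apply: eq_integral => w _; by rewrite mulN1r.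
by move: H; rewrite eX eY lee_fin.
Qed.


Lemma cdf_fin (X : {RV P >-> R}) (a : R) : cdf X a = (fine (cdf X a))%:E.
Proof. by rewrite fineK // fin_num_measure. Qed.

Lemma cdf_bound (X : {RV P >-> R}) (Xint : P.-integrable setT (EFin \o X)) (a x : R) :
  fine (cdf X a) * (x - a) <= MM X x (-1).
Proof.
have c0 : 0 <= fine (cdf X a) by apply: fine_ge0; exact: cdf_ge0.
case: (leP x a) => h.
  apply: le_trans (MM_ge0 Xint _ _); nra.
rewrite -lee_fin -(intM Xint).
pose B := X @^-1` `]-oo, a]%classic.
have mB : measurable B.
  by rewrite /B -[X in measurable X]setTI; apply: (measurable_funP X) => //; exact: measurable_itv.
have -> : (fine (cdf X a) * (x - a))%:E = (\int[P]_w ((x - a) * \1_B w)%:E)%E.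
  rewrite (@integralZl_indic _ _ _ P setT measurableT (fun _ => B)) //; last first.
    by move=> H0; exfalso; move: H0; rewrite subr_lt0 ltNge (ltW h).
  rewrite integral_indic // setIT mulrC EFinM -cdf_fin.
  by [].
apply: le_int_gen => w; rewrite lee_fin mulN1r.
rewrite /indic; case: (boolP (w \in B)) => wB /=.
  move: wB; rewrite inE /B /= in_itv /= => Xw.
  rewrite mulr1 le_max; apply/orP; left; lra.
by rewrite mulr0 le_max lexx orbT.
Qed.
End P1.
Definition two (R : realType) (a b : R) (x : bool) : R := if x then a else b.
Lemma two_mf (R : realType) (a b : R) : measurable_fun setT (two a b). Proof. by []. Qed.
HB.instance Definition _ (R : realType) (a b : R) :=
  isMeasurableFun.Build _ _ bool R (two a b) (two_mf a b).

Unset Implicit Arguments.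
Theorem lemma2 (d : measure_display) (T : measurableType d) (R : realType)
  (P : probability T R) (X Y : {RV P >-> R}) (alpha : R) :
  P.-integrable setT (EFin \o X) -> P.-integrable setT (EFin \o Y) ->
  cx_le X Y ->
  (cdf X alpha <= (hbound Y alpha)%:E)%E /\
  exists (d' : measure_display) (T' : measurableType d')
         (Q : probability T' R) (Xt : {RV Q >-> R}),
    cx_le Xt Y /\ cdf Xt alpha = (hbound Y alpha)%:E.
Proof.
move=> Xint Yint cx.
set S := [set w : R | forall x : R, ((w * (x - alpha))%:E <= int_cdf Y x)%E].
have HS w : S w <-> (forall x, w * (x - alpha) <= MM Y x (-1)).
  split => H x; [move: (H x); rewrite icdf // lee_fin | rewrite icdf // lee_fin; exact: H].
have S0 : S 0 by apply/HS => x; rewrite mul0r; exact: MM_ge0.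
have Sub x : alpha < x -> ubound S (MM Y x (-1) / (x - alpha)).
  move=> ax w /HS Hw; rewrite ler_pdivlMr ?subr_gt0 //; exact: Hw.
have hasS : has_sup S.
  split; first by exists 0.
  exists (MM Y (alpha + 1) (-1) / (alpha + 1 - alpha)); apply: Sub; lra.
set hs := sup S.
have hs0 : 0 <= hs by exact: sup_upper_bound.
have hsS x : hs * (x - alpha) <= MM Y x (-1).
  case: (leP x alpha) => h.
    by apply: le_trans (MM_ge0 Yint _ _); nra.
  rewrite -ler_pdivlMr ?subr_gt0 //; apply: ge_sup; [by exists 0 | exact: Sub].
have hbE : hbound Y alpha = Num.min 1 hs by [].
rewrite hbE; split.
  rewrite cdf_fin lee_fin.
  have c1 : fine (cdf X alpha) <= 1 by rewrite -lee_fin -cdf_fin; exact: cdf_le1.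
  have cS : S (fine (cdf X alpha)).
    by apply/HS => x; apply: le_trans (cdf_bound Xint alpha x) (G_le Xint Yint cx x).
  by rewrite le_min c1 /=; exact: sup_upper_bound.
have [hs1|hs1] := leP 1 hs.
  have mle : mY Y <= alpha.
    rewrite leNgt; apply/negP => ma.
    apply: (tail_small Yint (A := alpha) (del := mY Y - alpha)); first lra.
    move=> x ax; have := hsS x; rewrite (G_split Yint) => H; nra.
  exists _, _, (bernoulli_prob (1:R)), (two (mY Y) (mY Y)).
  split.
    move=> phi hphi _ _.
    rewrite (int_bern _ (fun b => phi (two (mY Y) (mY Y) b))) /=; last lra.
    apply: (conv_two Yint (p := 1) (a := mY Y) (b := mY Y)) => //; first lra.
    move=> k; have := Gk_ge Yint k; lra.
  rewrite /cdf /distribution /pushforward.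
  have -> : two (mY Y) (mY Y) @^-1` `]-oo, alpha]%classic = setT.
    by apply/seteqP; split => // b _; rewrite /= in_itv /=; case: b.
  exact: probability_setT.
have ma : alpha < mY Y.
  rewrite ltNge; apply/negP => ma.
  have : S 1.
    apply/HS => x; rewrite mul1r; apply: le_trans (Gk_ge Yint x).
    by rewrite le_max; apply/orP; left; lra.
  move/(sup_upper_bound hasS); rewrite -/hs; lra.
set b0 := (mY Y - hs * alpha) / (1 - hs).
have hb0 : hs * alpha + (1 - hs) * b0 = mY Y.
  by rewrite /b0; field; rewrite subr_eq0 gt_eqF.
have ab0 : alpha < b0 by nra.
exists _, _, (bernoulli_prob hs), (two alpha b0).
split.
  move=> phi hphi _ _.
  rewrite (int_bern _ (fun b => phi (two alpha b0 b))) /=; last lra.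
  apply: (conv_two Yint (p := hs) (a := alpha) (b := b0)) => //.
  move=> k; have G1 := Gk_ge Yint k; have G0 := MM_ge0 Yint k (-1); have G2 := hsS k.
  have [ka|ka] := leP k alpha.
    rewrite (max_idPr _) ?subr_le0 // (max_idPr _); last by rewrite subr_le0; lra.
    by rewrite !mulr0 addr0.
  rewrite (max_idPl _); last by rewrite subr_ge0 ltW.
  have [kb|kb] := leP k b0.
    by rewrite (max_idPr _) ?subr_le0 // mulr0 addr0.
  rewrite (max_idPl _); last by rewrite subr_ge0 ltW.
  apply: le_trans G1; rewrite le_max; apply/orP; left; nra.
rewrite /cdf /distribution /pushforward.
have -> : two alpha b0 @^-1` `]-oo, alpha]%classic = [set true].
  apply/seteqP; split => b; rewrite /= in_itv /=; case: b => //=.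
  by rewrite leNgt ab0.
have hs01 : (0 <= hs <= 1)%R by apply/andP; split; lra.
apply: eq_trans (bernoulli_probE hs01 [set true]) _.
by rewrite !diracE mem_set // memNset //= mule1 mule0 adde0.
Qed.
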